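(* Let $F$ be a hitting clause-set and $v$ a variable. Then $\mathrm{DP}_v(F)$ is a hitting clause-set.
   Context: Literals are variables $v$ and complements $\overline{v}$; a clause is a finite set of literals with no complementary pair; a clause-set is a finite set of clauses; for a set of literals $D$, $\overline{D}=\{\overline{y}:y\in D\}$. A clause-set $F$ is hitting if for all distinct $C,D\in F$ we have $C\cap\overline{D}\neq\emptyset$. $\mathrm{DP}_v(F) := \{C \in F : v \notin \mathrm{var}(C)\} \cup \{(C \cup D)\setminus\{v,\overline{v}\} : C, D \in F,\ C \cap \overline{D} = \{v\}\}$, where $\mathrm{var}(C)$ is the set of variables underlying the literals of $C$. *)

(* Defs.v *)
From HB Require Import structures.
From mathcomp Require Import all_boot.
From mathcomp Require Import finmap.
Set Implicit Arguments. Unset Strict Implicit. Unset Printing Implicit Defensive.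
Local Open Scope fset_scope.

Section Clauses.
Variable V : choiceType.

(* A literal is a pair (v, b): (v, true) is the variable v, (v, false) is its complement. *)
Definition lit := (V * bool)%type.
Definition posl (v : V) : lit := (v, true).
Definition negl (v : V) : lit := (v, false).
Definition litvar (x : lit) : V := x.1.
Definition complit (x : lit) : lit := (x.1, ~~ x.2).

Definition compl (D : {fset lit}) : {fset lit} := [fset complit y | y in D].
Definition var (C : {fset lit}) : {fset V} := [fset litvar y | y in C].

Definition is_clause (C : {fset lit}) : Prop := forall x, x \in C -> complit x \notin C.
Definition is_clause_set (F : {fset {fset lit}}) : Prop := forall C, C \in F -> is_clause C.

Definition hitting (F : {fset {fset lit}}) : Prop :=
  forall C D, C \in F -> D \in F -> C != D -> C `&` compl D != fset0.

Definition DP (v : V) (F : {fset {fset lit}}) : {fset {fset lit}} :=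
  [fset C in F | v \notin var C]
  `|` [fset (C `|` D) `\` [fset posl v; negl v] | C in F, D in F
         & C `&` compl D == [fset posl v]].

End Clauses.

(* Main.v *)
Require Import Defs.
From mathcomp Require Import all_boot finmap.
Local Open Scope fset_scope.
Set Implicit Arguments. Unset Strict Implicit.

Section S.
Variable V : choiceType.
Implicit Types (C D R : {fset lit V}) (x : lit V).

Lemma complitK : involutive (@complit V).
Proof. by case=> a b; rewrite /complit /= negbK. Qed.

Lemma in_compl x D : (x \in compl D) = (complit x \in D).
Proof.
rewrite -{1}(complitK x) /compl mem_imfset //.
exact: (can_inj complitK).
Qed.

Lemma clash C D x : x \in C -> complit x \in D -> C `&` compl D != fset0.
Proof. by move=> hC hD; apply/fset0Pn; exists x; rewrite inE in_compl hC hD. Qed.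

Lemma in_vl (v : V) x : (x \in [fset posl v; negl v]) = (x.1 == v).
Proof.
case: x => a [] /=; rewrite !inE /posl /negl !xpair_eqE /= ?andbT ?andbF ?orbF //.
Qed.

Lemma in_var (v : V) C : (v \in var C) = has (fun x => x.1 == v) C.
Proof.
apply/imfsetP/hasP => [[x xC ->]|[x xC /eqP <-]]; by exists x.
Qed.

Lemma inDP (v : V) F R : R \in DP v F ->
  (R \in F /\ v \notin var R) \/
  exists2 C, C \in F & exists2 D, D \in F &
     (C `&` compl D == [fset posl v]) /\ R = (C `|` D) `\` [fset posl v; negl v].
Proof.
rewrite /DP inE => /orP [|].
  by rewrite !inE => /andP[a b]; left.
move/imfset2P => [C]; rewrite /= => CF [D]; rewrite /= => DFe ->.
move: DFe => /andP[DF e].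
by right; exists C => //; exists D.
Qed.
Lemma complit1 x : (complit x).1 = x.1. Proof. by []. Qed.
Lemma complit_neq x : complit x != x.
Proof. by case: x => a [] ; rewrite /complit /= xpair_eqE /= andbF. Qed.

Lemma same_var C x y : is_clause C -> x \in C -> y \in C -> x.1 = y.1 -> x = y.
Proof.
move=> cl; case: x => a b; case: y => a' b' hx hy /= e; subst a'.
case: b b' hx hy => [] [] // hx hy.
- by move: (cl _ hx); rewrite /complit /= hy.
- by move: (cl _ hx); rewrite /complit /= hy.
Qed.

Lemma in_res (v : V) C D x :
  (x \in (C `|` D) `\` [fset posl v; negl v]) = (x.1 != v) && ((x \in C) || (x \in D)).
Proof. rewrite in_fsetD in_vl in_fsetU. by []. Qed.

Lemma res_facts (v : V) C D : C `&` compl D == [fset posl v] ->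
  [/\ posl v \in C, negl v \in D & forall x, x \in C -> complit x \in D -> x = posl v].
Proof.
move=> e.
have h x : (x \in C) && (complit x \in D) = (x == posl v).
  by rewrite -in_compl -in_fsetI (eqP e) inE.
have := h (posl v); rewrite eqxx => /andP[a b]; split => // x xC xD.
by apply/eqP; rewrite -h xC xD.
Qed.

Lemma hit_sym C D : C `&` compl D != fset0 -> D `&` compl C != fset0.
Proof.
case/fset0Pn => x; rewrite inE in_compl => /andP[a b].
by apply: (clash b); rewrite complitK.
Qed.

Lemma novar (v : V) C x : v \notin var C -> x \in C -> x.1 != v.
Proof.
rewrite in_var => /hasPn h xC; exact: h.
Qed.

Lemma case_b (v : V) F R A B : hitting F -> R \in F -> v \notin var R ->
  A \in F -> B \in F -> A `&` compl B == [fset posl v] ->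
  R `&` compl ((A `|` B) `\` [fset posl v; negl v]) != fset0.
Proof.
move=> hF RF nv AF BF e; have [pA nB _] := res_facts e.
have neq : R != A.
  apply/negP => /eqP eRA; subst R.
  by move: (novar nv pA); rewrite eqxx.
case/fset0Pn: (hF _ _ RF AF neq) => x; rewrite inE in_compl => /andP[xR cxA].
apply: (clash xR); rewrite in_res complit1 (novar nv xR) /=.
by rewrite cxA.
Qed.
End S.

Theorem lemma4 (V : choiceType) (F : {fset {fset lit V}}) (v : V) :
  is_clause_set F -> hitting F ->
  is_clause_set (DP v F) /\ hitting (DP v F).
Proof.
move=> cF hF; split.
  move=> R /inDP [[RF _]|[C CF [D DF [e ->]]]]; first exact: cF.
  have [pC nD hx] := res_facts e.
  move=> x; rewrite !in_res complit1 => /andP[xv /orP[xC|xD]]; rewrite xv /=;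
    apply/negP => /orP[cC|cD].
  - by move: (cF _ CF _ xC); rewrite cC.
  - by move: xv; rewrite (hx _ xC cD) eqxx.
  - have := hx _ cC; rewrite complitK => /(_ xD) ex.
    by move: xv; rewrite -complit1 ex eqxx.
  - by move: (cF _ DF _ xD); rewrite cD.
move=> R1 R2 /inDP [[R1F n1]|[A AF [B BF [e1 ->]]]] /inDP [[R2F n2]|[A' AF' [B' BF' [e2 ->]]]] ne.
- exact: hF.
- exact: (case_b hF).
- by apply: hit_sym; apply: (case_b hF).
have [pA nB _] := res_facts e1; have [pA' nB' _] := res_facts e2.
have [eA|nA] := eqVneq A A'; last first.
  case/fset0Pn: (hF _ _ AF AF' nA) => x; rewrite inE in_compl => /andP[xA cxA].
  have xv : x.1 != v.
    apply/negP => /eqP xv.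
    have e1' := same_var (cF _ AF) xA pA xv.
    have e2' := same_var (cF _ AF') cxA pA' xv.
    by move: (complit_neq x); rewrite e2' e1' eqxx.
  by apply: (clash (x:=x)); rewrite in_res ?complit1 xv ?xA ?cxA.
have [eB|nBB] := eqVneq B B'.
  by move: ne; rewrite eA eB eqxx.
case/fset0Pn: (hF _ _ BF BF' nBB) => x; rewrite inE in_compl => /andP[xB cxB].
have xv : x.1 != v.
  apply/negP => /eqP xv.
  have e1' := same_var (cF _ BF) xB nB xv.
  have e2' := same_var (cF _ BF') cxB nB' xv.
  by move: (complit_neq x); rewrite e2' e1' eqxx.
by apply: (clash (x:=x)); rewrite in_res ?complit1 xv ?xB ?cxB ?orbT.
Qed.
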